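(* In the setting described in the context, for every $\gamma \in (0,\frac12)$ and every $\lambda_0 > 1$, \[\hat\Sigma = \bigcup_{0 \leq k \leq q} F_k \;\cup \bigcup_{0 \leq j < k \leq q} E_{j,k} \;\cup \bigcup_{0 \leq i < j < k \leq q} G_{i,j,k}.\]
   Context: $n\ge3$; $u_0,\dots,u_q$ are non-constant linear (affine) functions on $\mathbb{R}^n$ and $\Omega=\bigcap_{m=0}^q\{u_m\le 0\}$ is a compact convex polytope with non-empty interior. Fix a smooth even $\eta:\mathbb{R}\to\mathbb{R}$ with $\eta(t)=|t|$ for $|t|\ge\frac12$ and $\eta''\ge0$. For $\gamma\in(0,\frac12)$, $\lambda_0>1$ put $\lambda_k=\gamma^{-k}\lambda_0$ ($1\le k\le q$), $\hat u_0=u_0$, $\hat u_k=\frac12\big(\hat u_{k-1}+u_k+\lambda_k^{-1}\eta(\lambda_k(\hat u_{k-1}-u_k))\big)$, and $\hat\Sigma=\{\hat u_q=0\}$. Write $P_m=\{\hat u_{m-1}-u_m>\lambda_m^{-1}\}$, with empty intersections of such sets equal to $\mathbb{R}^n$. Define: $F_0=\hat\Sigma\cap\bigcap_{m=1}^q P_m$; for $1\le k\le q$, $F_k=\hat\Sigma\cap\bigcap_{m=k+1}^q P_m\cap\{\hat u_{k-1}-u_k<-\lambda_k^{-1}\}$. For $1\le k\le q$, $E_{0,k}=\hat\Sigma\cap\bigcap_{m=k+1}^q P_m\cap\bigcap_{m=1}^{k-1}P_m\cap\{-2\lambda_k^{-1}\le\hat u_{k-1}\le0\}\cap\{-2\lambda_k^{-1}\le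 u_k\le0\}\cap\{-2\lambda_k^{-1}\le u_0\le0\}$. For $1\le j<k\le q$, $E_{j,k}=\hat\Sigma\cap\bigcap_{m=k+1}^q P_m\cap\bigcap_{m=j+1}^{k-1}P_m\cap\{-2\lambda_k^{-1}\le\hat u_{k-1}\le0\}\cap\{-2\lambda_k^{-1}\le u_k\le0\}\cap\{-2\lambda_k^{-1}\le u_j\le0\}\cap\{\hat u_{j-1}-u_j<-\lambda_j^{-1}\}$. For $0\le i<j<k\le q$, $G_{i,j,k}=\hat\Sigma\cap\bigcap_{m=k+1}^q P_m\cap\bigcap_{m=j+1}^{k-1}P_m\cap\{-2\lambda_k^{-1}\le\hat u_{k-1}\le0\}\cap\{-2\lambda_k^{-1}\le u_k\le0\}\cap\{-4\lambda_j^{-1}\le u_j\le0\}\cap\{-6\lambda_i^{-1}\le u_i\le0\}$. *)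

(* Defs.v *)
From HB Require Import structures.
From mathcomp Require Import all_boot all_order all_algebra.
From mathcomp Require Import all_classical all_reals all_analysis.
Set Implicit Arguments. Unset Strict Implicit. Unset Printing Implicit Defensive.
Import Order.TTheory GRing.Theory Num.Theory.
Import numFieldNormedType.Exports.
Local Open Scope classical_set_scope.
Local Open Scope ring_scope.

Section Defs.
Variables (R : realType) (n : nat).
Variables (eta : R -> R) (gamma lambda0 : R) (u : nat -> 'rV[R]_n -> R).

Definition lam (k : nat) : R := gamma ^- k * lambda0.

Fixpoint hatu (k : nat) (x : 'rV[R]_n) : R :=
  match k with
  | 0 => u 0 x
  | k'.+1 => (hatu k' x + u k'.+1 x
              + (lam k'.+1)^-1 * eta (lam k'.+1 * (hatu k' x - u k'.+1 x))) / 2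
  end.

Variable q : nat.

Definition hatSigma : set 'rV[R]_n := [set x | hatu q x = 0].

Definition Pset (m : nat) : set 'rV[R]_n :=
  [set x | (lam m)^-1 < hatu m.-1 x - u m x].

Definition Pcap (a b : nat) : set 'rV[R]_n :=
  [set x | forall m, (a <= m <= b)%N -> Pset m x].

Definition F0 : set 'rV[R]_n := hatSigma `&` Pcap 1 q.

(* for 1 <= k <= q *)
Definition Fk (k : nat) : set 'rV[R]_n :=
  hatSigma `&` Pcap k.+1 q `&` [set x | hatu k.-1 x - u k x < - (lam k)^-1].

(* for 1 <= k <= q *)
Definition E0k (k : nat) : set 'rV[R]_n :=
  hatSigma `&` Pcap k.+1 q `&` Pcap 1 k.-1
  `&` [set x | - (2 * (lam k)^-1) <= hatu k.-1 x <= 0]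
  `&` [set x | - (2 * (lam k)^-1) <= u k x <= 0]
  `&` [set x | - (2 * (lam k)^-1) <= u 0 x <= 0].

(* for 1 <= j < k <= q *)
Definition Ejk (j k : nat) : set 'rV[R]_n :=
  hatSigma `&` Pcap k.+1 q `&` Pcap j.+1 k.-1
  `&` [set x | - (2 * (lam k)^-1) <= hatu k.-1 x <= 0]
  `&` [set x | - (2 * (lam k)^-1) <= u k x <= 0]
  `&` [set x | - (2 * (lam k)^-1) <= u j x <= 0]
  `&` [set x | hatu j.-1 x - u j x < - (lam j)^-1].

Definition Gijk (i j k : nat) : set 'rV[R]_n :=
  hatSigma `&` Pcap k.+1 q `&` Pcap j.+1 k.-1
  `&` [set x | - (2 * (lam k)^-1) <= hatu k.-1 x <= 0]
  `&` [set x | - (2 * (lam k)^-1) <= u k x <= 0]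
  `&` [set x | - (4 * (lam j)^-1) <= u j x <= 0]
  `&` [set x | - (6 * (lam i)^-1) <= u i x <= 0].

Definition Fset (k : nat) : set 'rV[R]_n := if k == 0%N then F0 else Fk k.
Definition Eset (j k : nat) : set 'rV[R]_n := if j == 0%N then E0k k else Ejk j k.

Definition union_decomposition : set 'rV[R]_n :=
  [set x | (exists k, (k <= q)%N /\ Fset k x)
        \/ (exists j k, (j < k <= q)%N /\ Eset j k x)
        \/ (exists i j k, (i < j)%N /\ (j < k <= q)%N /\ Gijk i j k x)].

End Defs.

Definition Omega (R : realType) (n q : nat) (u : nat -> 'rV[R]_n -> R) : set 'rV[R]_n :=
  [set x | forall m, (m <= q)%N -> u m x <= 0].

Definition nonconst_affine (R : realType) (n : nat) (f : 'rV[R]_n -> R) : Prop :=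
  exists (a : 'rV[R]_n) (b : R), a != 0 /\ forall x, f x = (x *m a^T) 0 0 + b.

(* Main.v *)
Require Import Defs.
From HB Require Import structures.
From mathcomp Require Import all_boot all_order all_algebra.
From mathcomp Require Import all_classical all_reals all_analysis.
From mathcomp Require Import zify ring lra.
Import Order.TTheory GRing.Theory Num.Theory.
Import numFieldNormedType.Exports.
Local Open Scope classical_set_scope.
Local Open Scope ring_scope.
Lemma eta_conv (R : realType) (eta : R -> R)
  (Hd : forall (k : nat) (t : R), derivable (derive1n k eta) t 1)
  (H2 : forall t, 0 <= derive1n 2 eta t) (a b t : R) :
  0 <= t -> t <= 1 -> a <= b ->
  eta (t * a + (1 - t) * b) <= t * eta a + (1 - t) * eta b.
Proof.
move=> t0 t1 ab.
have cont : forall x, {for x, continuous eta}.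
  move=> x; apply/differentiable_continuous; rewrite -derivable1_diffP.
  exact: (Hd 0%N x).
have De : derive1 eta = 'D_1 eta by apply/funext => y; rewrite derive1E.
have := @second_derivative_convex R (eta : R -> R^o) a b _ _ _ _ _ (Itv01 t0 t1) ab.
rewrite !convRE /=; apply.
- move=> x _; have := H2 x; rewrite /derive1n /= derive1E De //.
- exact/cvg_at_left_filter/cont.
- exact/cvg_at_right_filter/cont.
- by move=> x _; exact: (Hd 0%N x).
- move=> x _; have := Hd 1%N x. by rewrite /derive1n /= De.
Qed.

Section EtaFacts.
Variables (R : realType) (eta : R -> R).
Hypothesis Hd : forall (k : nat) (t : R), derivable (derive1n k eta) t 1.
Hypothesis Hev : forall t, eta (- t) = eta t.
Hypothesis HA : forall t, 2^-1 <= `|t| -> eta t = `|t|.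
Hypothesis H2 : forall t, 0 <= derive1n 2 eta t.

Lemma eta_half : eta 2^-1 = 2^-1.
Proof. by rewrite HA ger0_norm. Qed.

Lemma eta_mhalf : eta (- 2^-1) = 2^-1.
Proof. by rewrite Hev eta_half. Qed.

Lemma eta_one : eta 1 = 1.
Proof. rewrite HA ?normr1 //; lra. Qed.

Lemma eta_ge_pos s : 0 <= s -> s <= eta s.
Proof.
move=> s0; have [sh|sh] := leP 2^-1 s.
  by rewrite HA ger0_norm //; lra.
set tau := (2 * (1 - s))^-1.
have tpos : 0 < tau by rewrite /tau invr_gt0; lra.
have t1 : tau <= 1.
  rewrite /tau invf_le1; lra.
have E : tau * (1 - s) = 2^-1 by rewrite /tau; field; lra.
have s1 : s <= 1 by lra.
have := @eta_conv _ _ Hd H2 s 1 tau (ltW tpos) t1 s1.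
have -> : tau * s + (1 - tau) * 1 = 2^-1 by lra.
rewrite eta_half eta_one => H.
have h3 : 0 <= tau * (eta s - s) by lra.
by rewrite -subr_ge0; move: h3; rewrite pmulr_rge0.
Qed.

Lemma eta_ge s : s <= eta s /\ - s <= eta s.
Proof.
have [s0|s0] := leP 0 s.
  split; first exact: eta_ge_pos.
  have := @eta_ge_pos s s0; lra.
have : - s <= eta (- s) by apply: eta_ge_pos; lra.
rewrite Hev; lra.
Qed.

Lemma eta_le s : - 2^-1 <= s <= 2^-1 -> eta s <= 2^-1.
Proof.
move=> /andP[h1 h2].
set tau := 2^-1 - s.
have t0 : 0 <= tau by rewrite /tau; lra.
have t1 : tau <= 1 by rewrite /tau; lra.
have hh : - 2^-1 <= 2^-1 :> R by lra.
have := @eta_conv _ _ Hd H2 _ _ tau t0 t1 hh.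
have -> : tau * - 2^-1 + (1 - tau) * 2^-1 = s by rewrite /tau; field.
rewrite eta_half eta_mhalf; lra.
Qed.

Lemma eta_big s : 2^-1 <= s -> eta s = s.
Proof. by move=> h; rewrite HA ger0_norm //; lra. Qed.

Lemma eta_mbig s : s <= - 2^-1 -> eta s = - s.
Proof. by move=> h; rewrite HA ler0_norm //; lra. Qed.

End EtaFacts.

Section Main.
Variables (R : realType) (n : nat) (eta : R -> R) (gamma lambda0 : R)
  (u : nat -> 'rV[R]_n -> R) (q : nat).
Hypothesis Hge : forall s, s <= eta s /\ - s <= eta s.
Hypothesis Hle : forall s, - 2^-1 <= s <= 2^-1 -> eta s <= 2^-1.
Hypothesis Hbig : forall s, 2^-1 <= s -> eta s = s.
Hypothesis Hmbig : forall s, s <= - 2^-1 -> eta s = - s.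
Hypothesis Hg0 : 0 < gamma.
Hypothesis Hg1 : gamma < 2^-1.
Hypothesis Hl : 1 < lambda0.

Local Notation lam := (lam gamma lambda0).
Local Notation li k := (lam k)^-1.

Lemma li_E k : li k = gamma ^+ k * lambda0^-1.
Proof. by rewrite /Defs.lam invfM invrK. Qed.

Lemma li_pos k : 0 < li k.
Proof.
have l0 : 0 < lambda0^-1.
  by rewrite invr_gt0; exact: (lt_trans ltr01 Hl).
have g0 : 0 < gamma ^+ k by apply: exprn_gt0.
by rewrite li_E; apply: mulr_gt0.
Qed.

Lemma li_half j k : (j < k)%N -> li k <= li j / 2.
Proof.
move=> jk; rewrite !li_E.
have hg0 := Hg0; have hg1 := Hg1; have hl := Hl.
have g0 : 0 <= gamma by lra.
have g1 : gamma <= 1 by lra.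
have h1 : gamma ^+ k <= gamma ^+ j.+1 by apply: ler_wiXn2l.
have h2 : 0 <= gamma ^+ j by apply: exprn_ge0.
have h3 : 0 < lambda0^-1 by rewrite invr_gt0; lra.
rewrite exprS in h1.
set A := gamma ^+ k in h1 *; set B := gamma ^+ j in h1 h2 *.
set C := lambda0^-1 in h3 *.
have h4 : A <= B / 2 by nra.
rewrite [X in _ <= X]mulrAC; apply: ler_wpM2r => //; exact: ltW.
Qed.

Lemma li_mono j k : (j <= k)%N -> li k <= li j.
Proof.
rewrite leq_eqVlt => /orP[/eqP->//|/li_half]; have := li_pos j; lra.
Qed.

Lemma efacts L d : 0 < L ->
  let e := L^-1 * eta (L * d) in
  d <= e /\ - d <= e /\ (0 <= d -> e <= d + L^-1 / 2) /\
      (d <= 0 -> e <= - d + L^-1 / 2) /\ (L^-1 / 2 <= d -> e = d)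
    /\ (d <= - (L^-1 / 2) -> e = - d).
Proof.
move=> L0 e.
have c0 : 0 < L^-1 by rewrite invr_gt0.
rewrite /e; set s := L * d.
have ds : d = L^-1 * s by rewrite /s mulrA mulVf ?mul1r //; lra.
clearbody s; rewrite ds; set c := L^-1 in c0 *.
have [g1 g2] := Hge s.
refine (conj _ (conj _ (conj _ (conj _ (conj _ _))))).
- by rewrite (ler_pM2l c0).
- by rewrite -mulrN (ler_pM2l c0).
- move=> h; have s0 : 0 <= s by rewrite -(pmulr_rge0 s c0).
  have [sh|sh] := leP 2^-1 s; first by rewrite Hbig //; lra.
  have h2 : eta s <= 2^-1 by apply: Hle; apply/andP; split; lra.
  have : c * eta s <= c * 2^-1 by rewrite (ler_pM2l c0).
  lra.
- move=> h; have s0 : s <= 0 by rewrite -(pmulr_rle0 s c0).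
  have [sh|sh] := leP s (- 2^-1); first by rewrite Hmbig // mulrN; lra.
  have h2 : eta s <= 2^-1 by apply: Hle; apply/andP; split; lra.
  have : c * eta s <= c * 2^-1 by rewrite (ler_pM2l c0).
  lra.
- move=> h; rewrite Hbig //.
  by rewrite -(ler_pM2l c0).
- move=> h; rewrite Hmbig ?mulrN //.
  by rewrite -(ler_pM2l c0) mulrN.
Qed.

Local Notation h m x := (hatu eta gamma lambda0 u m x).

Lemma lam_pos k : 0 < lam k.
Proof. by have := li_pos k; rewrite invr_gt0. Qed.

Lemma step x m :
  let a := h m x in let b := u m.+1 x in let c := li m.+1 in
  let H := h m.+1 x in
  a <= H /\ b <= H /\ (c / 2 <= a - b -> H = a) /\ (a - b <= - (c / 2) -> H = b)
  /\ (b <= a -> H <= a + c / 4) /\ (a <= b -> H <= b + c / 4).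
Proof.
move=> a b c H.
have [e1 [e2 [e3 [e4 [e5 e6]]]]] := efacts (lam m.+1) (a - b) (lam_pos m.+1).
have HE : H = (a + b + c * eta (lam m.+1 * (a - b))) / 2 by [].
rewrite HE; rewrite -/c in e1 e2 e3 e4 e5 e6.
move: e1 e2 e3 e4 e5 e6; set e := c * eta _ => e1 e2 e3 e4 e5 e6.
have c0 : 0 < c := li_pos m.+1.
clearbody e c a b.
refine (conj _ (conj _ (conj _ (conj _ (conj _ _))))).
- lra.
- lra.
- move=> hh; rewrite e5 //; lra.
- move=> hh; rewrite e6 //; lra.
- move=> hh; have := e3 (_ : 0 <= a - b); lra.
- move=> hh; have := e4 (_ : a - b <= 0); lra.
Qed.

Lemma chain x a b : (0 < a)%N -> (a <= b.+1)%N ->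
  Pcap eta gamma lambda0 u a b x -> h b x = h a.-1 x.
Proof.
move=> a0; elim: b => [|b IH] ab P.
  by have -> : a = 1%N by lia.
have [->|ne] := eqVneq a b.+2; first by [].
have ab' : (a <= b.+1)%N by lia.
have Pb : Pset eta gamma lambda0 u b.+1 x by apply: P; lia.
rewrite -IH //; last by move=> m hm; apply: P; lia.
have [_ [_ [e3 _]]] := step x b.
apply: e3; move: Pb; rewrite /Pset /=.
have := li_pos b.+1; lra.
Qed.

Lemma last_fail (P : nat -> Prop) a b :
  ~ (forall m, (a <= m <= b)%N -> P m) ->
  exists k, (a <= k <= b)%N /\ ~ P k /\ (forall m, (k < m <= b)%N -> P m).
Proof.
elim: b => [|b IH] H.
  exists 0%N; split.
    apply/andP; split => //; apply: contrapT => ha; apply: H => m hm; lia.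
  split; last by move=> m; lia.
  move=> P0; apply: H => m hm; have -> : m = 0%N by lia. by [].
have [Pb|nPb] := pselect (P b.+1).
  have [|k [hk1 [hk2 hk3]]] := IH.
    move=> hall; apply: H => m hm.
    have [->//|ne] := eqVneq m b.+1; apply: hall; lia.
  exists k; split; first lia.
  split => // m hm; have [->//|ne] := eqVneq m b.+1; apply: hk3; lia.
have [ab|ab] := leqP a b.+1.
  exists b.+1; split; first lia.
  split => // m hm; lia.
exfalso; apply: H => m hm; lia.
Qed.

Lemma active x m : exists i, (i <= m)%N /\ u i x <= h m x /\
  h m x - 3 / 4 * li i <= u i x.
Proof.
elim: m => [|m [i [hi1 [hi2 hi3]]]].
  exists 0%N; split => //=; split => //; have := li_pos 0; lra.
have [e1 [e2 [e3 [e4 [e5 e6]]]]] := step x m.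
have c0 := li_pos m.+1.
have ci := li_pos i.
move: e1 e2 e3 e4 e5 e6 hi2 hi3.
set A := h m x; set Hm := h m.+1 x; set B := u m.+1 x; set c := li m.+1.
set C := li i; set U := u i x.
move=> e1 e2 e3 e4 e5 e6 hi2 hi3.
have [d1|d1] := leP (c / 2) (A - B).
  exists i; split; first exact: leqW; rewrite e3 //.
have [d2|d2] := leP (A - B) (- (c / 2)).
  exists m.+1; split => //; rewrite e4 //; split => //; rewrite -/B -/c; timeout 20 lra.
exists m.+1; split => //; split => //; rewrite -/B -/c.
have [ba|ab] := leP B A.
  have := e5 ba; timeout 20 lra.
have := e6 (ltW ab); timeout 20 lra.
Qed.

Lemma main_incl x : hatSigma eta gamma lambda0 u q x ->
  union_decomposition eta gamma lambda0 u q x.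
Proof.
rewrite /hatSigma /union_decomposition /= => hx.
have [Pall|Pnot] := pselect (Pcap eta gamma lambda0 u 1 q x).
  by left; exists 0%N; split => //; rewrite /Fset /=; split.
have [k [k1q [nPk Pk]]] := last_fail (fun m => Pset eta gamma lambda0 u m x) 1 q Pnot.
have Pck : Pcap eta gamma lambda0 u k.+1 q x by [].
have hk : h k x = 0.
  have kq : (k.+1 <= q.+1)%N by move: k1q => /andP[_ kq]; rewrite ltnS.
  by have := @chain x k.+1 q (ltn0Sn k) kq Pck; rewrite hx /= => <-.
case: k k1q nPk Pk Pck hk => [//|k] k1q nPk Pk Pck hk.
have [e1 [e2 [e3 [e4 [e5 e6]]]]] := step x k.
have ck := li_pos k.+1.
rewrite /Pset /= in nPk.
have [dk|dk] := ltP (h k x - u k.+1 x) (- li k.+1).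
  left; exists k.+1; split; first by case/andP: k1q.
  by rewrite /Fset /=; split; [split|].
have nPk' : h k x - u k.+1 x <= li k.+1 by rewrite leNgt; apply/negP.
have Hk : - (2 * li k.+1) <= h k x <= 0 /\ - (2 * li k.+1) <= u k.+1 x <= 0.
  move: e1 e2 e5 e6; rewrite hk => e1 e2 e5 e6.
  have [ba|ab] := leP (u k.+1 x) (h k x).
    have := e5 ba => e7; split; apply/andP; split; lra.
  have := e6 (ltW ab) => e7; split; apply/andP; split; lra.
case: Hk => Hk1 Hk2.
have [P1k|P1k] := pselect (Pcap eta gamma lambda0 u 1 k x).
  have h0 : h k x = u 0%N x by rewrite (@chain x 1%N k).
  right; left; exists 0%N, k.+1; split; first by case/andP: k1q.
  rewrite /Eset /=; split; [split; [split; [split; [split|]|]|]|] => //.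
  by rewrite /= -h0.
have [j [j1k [nPj Pj]]] := last_fail (fun m => Pset eta gamma lambda0 u m x) 1 k P1k.
have Pcj : Pcap eta gamma lambda0 u j.+1 k x by [].
have hj : h k x = h j x.
  have jk : (j.+1 <= k.+1)%N by move: j1k => /andP[_ jk]; rewrite ltnS.
  by rewrite (@chain x j.+1 k (ltn0Sn j) jk Pcj).
case: j j1k nPj Pj Pcj hj => [//|j] j1k nPj Pj Pcj hj.
rewrite /Pset /= in nPj.
have [f1 [f2 [f3 [f4 [f5 f6]]]]] := step x j.
have cj := li_pos j.+1.
have jk : (j.+1 < k.+1)%N by move: j1k => /andP[_ jk]; rewrite ltnS.
have [dj|dj] := ltP (h j x - u j.+1 x) (- li j.+1).
  have hj' : h j.+1 x = u j.+1 x by apply: f4; lra.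
  right; left; exists j.+1, k.+1; split; first by rewrite jk; case/andP: k1q.
  rewrite /Eset /Ejk /=.
  split; [split; [split; [split; [split; [split|]|]|]|]|] => //.
  by rewrite -hj' -hj.
have nPj' : h j x - u j.+1 x <= li j.+1 by rewrite leNgt; apply/negP.
have [i [ij [hi1 hi2]]] := active x j.
have lkj := @li_half j.+1 k.+1 jk.
have lji : li j.+1 <= li i by apply: li_mono; rewrite ltnW // ltnS.
have ci := li_pos i.
right; right; exists i, j.+1, k.+1.
split; first by rewrite ltnS.
split; first by rewrite jk; case/andP: k1q.
rewrite /Gijk /=.
split; [split; [split; [split; [split; [split|]|]|]|]|] => //.
- move: f1 f2 f5 f6; rewrite -hj => f1 f2 f5 f6.
  move: Hk1 => /andP[Hk1 Hk1'].
  apply/andP; split; last lra.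
  have [ba|ab] := leP (u j.+1 x) (h j x).
    have := f5 ba => e7; lra.
  have := f6 (ltW ab) => e7; lra.
- move: f1 f2 f5 f6; rewrite -hj => f1 f2 f5 f6.
  move: Hk1 => /andP[Hk1 Hk1'].
  have hjl : - (9 / 4 * li j.+1) <= h j x <= 0.
    apply/andP; split; last lra.
    have [ba|ab] := leP (u j.+1 x) (h j x).
      have := f5 ba => e7; lra.
    have := f6 (ltW ab) => e7; lra.
  move: hjl => /andP[hjl hjl'].
  apply/andP; split; lra.
Qed.

End Main.

Theorem proposition2p17 (R : realType) (n q : nat) (u : nat -> 'rV[R]_n -> R)
  (eta : R -> R) :
  (3 <= n)%N ->
  (forall m, (m <= q)%N -> nonconst_affine (u m)) ->
  compact (Omega q u) ->
  interior (Omega q u) !=set0 ->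
  (* eta smooth, even, eta(t) = |t| for |t| >= 1/2, eta'' >= 0 *)
  (forall (k : nat) (t : R), derivable (derive1n k eta) t 1) ->
  (forall t, eta (- t) = eta t) ->
  (forall t, 2^-1 <= `|t| -> eta t = `|t|) ->
  (forall t, 0 <= derive1n 2 eta t) ->
  forall gamma lambda0 : R, 0 < gamma < 2^-1 -> 1 < lambda0 ->
  hatSigma eta gamma lambda0 u q = union_decomposition eta gamma lambda0 u q.
Proof.
move=> _ _ _ _ Hd Hev HA H2 gamma lambda0 /andP[g0 g1] l1.
apply/seteqP; split => x.
  exact: (@main_incl R n eta gamma lambda0 u q (@eta_ge R eta Hd Hev HA H2) (@eta_le R eta Hd Hev HA H2)
            (@eta_big R eta HA) (@eta_mbig R eta HA) g0 g1 l1 x).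
case => [[k [_ Hk]]|[[j [k [_ Hk]]]|[i [j [k [_ [_ Hk]]]]]]].
- move: Hk; rewrite /Fset; case: ifP => _.
    by case.
  by case => -[].
- move: Hk; rewrite /Eset; case: ifP => _.
    by case => -[] [] [] [] [].
  by case => -[] [] [] [] [] [].
- by move: Hk; case => -[] [] [] [] [] [].
Qed.
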